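(* Let $N\in\mathbb{C}^{m\times n}$ have rank $r$ and singular value decomposition $N=U\begin{pmatrix}\Sigma & 0\\ 0 & 0\end{pmatrix}V^{\ast}$, where $\Sigma\in\mathbb{C}^{r\times r}$ is diagonal with positive diagonal entries and $U\in\mathbb{C}^{m\times m}$, $V\in\mathbb{C}^{n\times n}$ are unitary. Let $X\in\mathbb{C}^{m\times m}$ and $Y\in\mathbb{C}^{n\times n}$ be nonsingular, and let $M_{1}=XN$, $M_{2}=NY$. (1) If $X=U\begin{pmatrix}X_{1} & 0\\ X_{2} & X_{4}\end{pmatrix}U^{\ast}$ for some $X_{1}\in\mathbb{C}^{r\times r}$, $X_{2}\in\mathbb{C}^{(m-r)\times r}$, $X_{4}\in\mathbb{C}^{(m-r)\times(m-r)}$, then $$M_{1}M_{1}^{\dagger}=(I+R)NN^{\dagger}(I+R^{\ast}R)^{-1}(I+R^{\ast}),$$ where $R=XE_{N}X^{-1}(E_{N}-I)$. (2) If $Y=V\begin{pmatrix}Y_{1} & Y_{3}\\ 0 & Y_{4}\end{pmatrix}V^{\ast}$ for some $Y_{1}\in\mathbb{C}^{r\times r}$, $Y_{3}\in\mathbb{C}^{r\times(n-r)}$, $Y_{4}\in\mathbb{C}^{(n-r)\times(n-r)}$, then $$M_{2}^{\dagger}M_{2}=(I+L^{\ast})(I+LL^{\ast})^{-1}N^{\dagger}N(I+L),$$ where $L=(F_{N}-I)Y^{-1}F_{N}Y$.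
   Context: For a complex matrix $A$, $A^{\ast}$ is its conjugate transpose and $A^{\dagger}$ its Moore--Penrose inverse. $E_{A}:=I-AA^{\dagger}$ and $F_{A}:=I-A^{\dagger}A$. $I$ denotes an identity matrix of the appropriate size. *)

(* Defs.v *)
From HB Require Import structures.
From mathcomp Require Import all_boot all_order all_algebra.
From mathcomp Require Import sesquilinear spectral.
From Stdlib Require Import ClassicalEpsilon.
Set Implicit Arguments. Unset Strict Implicit. Unset Printing Implicit Defensive.
Import Order.TTheory GRing.Theory Num.Theory.
Local Open Scope ring_scope.
Local Open Scope sesquilinear_scope.

Definition penrose {C : numClosedFieldType} {m n : nat}
  (A : 'M[C]_(m, n)) (G : 'M[C]_(n, m)) : Prop :=
  [/\ A *m G *m A = A, G *m A *m G = G,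
      (A *m G) ^t* = A *m G & (G *m A) ^t* = G *m A].

(* The Moore--Penrose inverse A^dagger: the (unique, existing) matrix
   satisfying the Penrose equations, selected by Hilbert's epsilon. *)
Definition mpinv {C : numClosedFieldType} {m n : nat} (A : 'M[C]_(m, n))
  : 'M[C]_(n, m) := epsilon (inhabits 0) (penrose A).

Definition EA {C : numClosedFieldType} {m n : nat} (A : 'M[C]_(m, n)) : 'M[C]_m :=
  1%:M - A *m mpinv A.
Definition FA {C : numClosedFieldType} {m n : nat} (A : 'M[C]_(m, n)) : 'M[C]_n :=
  1%:M - mpinv A *m A.

(* Main.v *)
Require Import Defs.
From HB Require Import structures.
From mathcomp Require Import all_boot all_order all_algebra.
From mathcomp Require Import sesquilinear spectral.
From Stdlib Require Import ClassicalEpsilon.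
Import Order.TTheory GRing.Theory Num.Theory.
Local Open Scope ring_scope.
Local Open Scope sesquilinear_scope.

Section Aux.
Variable C : numClosedFieldType.
Local Set Implicit Arguments. Local Unset Strict Implicit.

Lemma ctM m n k (A : 'M[C]_(m, n)) (B : 'M[C]_(n, k)) :
  (A *m B) ^t* = B ^t* *m A ^t*.
Proof. by rewrite trmx_mul map_mxM. Qed.

Lemma ctD m n (A B : 'M[C]_(m, n)) : (A + B) ^t* = A ^t* + B ^t*.
Proof. by apply/matrixP=> i j; rewrite !mxE rmorphD. Qed.

Lemma ctN m n (A : 'M[C]_(m, n)) : (- A) ^t* = - A ^t*.
Proof. by apply/matrixP=> i j; rewrite !mxE rmorphN. Qed.

Lemma ct0 m n : (0 : 'M[C]_(m, n)) ^t* = 0.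
Proof. by apply/matrixP=> i j; rewrite !mxE rmorph0. Qed.

Lemma ct1 n : (1%:M : 'M[C]_n) ^t* = 1%:M.
Proof. by rewrite trmx1 map_mx1. Qed.

Lemma ct_block m1 m2 n1 n2 (A : 'M[C]_(m1, n1)) (B : 'M[C]_(m1, n2))
  (D : 'M[C]_(m2, n1)) (E : 'M[C]_(m2, n2)) :
  (block_mx A B D E) ^t* = block_mx (A ^t*) (D ^t*) (B ^t*) (E ^t*).
Proof. by rewrite tr_block_mx map_block_mx. Qed.

Lemma ct_col m1 m2 n (A : 'M[C]_(m1, n)) (B : 'M[C]_(m2, n)) :
  (col_mx A B) ^t* = row_mx (A ^t*) (B ^t*).
Proof. by rewrite tr_col_mx map_row_mx. Qed.

Lemma ct_row m n1 n2 (A : 'M[C]_(m, n1)) (B : 'M[C]_(m, n2)) :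
  (row_mx A B) ^t* = col_mx (A ^t*) (B ^t*).
Proof. by rewrite tr_row_mx map_col_mx. Qed.

Lemma ct_unit n (A : 'M[C]_n) : (A ^t* \in unitmx) = (A \in unitmx).
Proof. by rewrite map_unitmx unitmx_tr. Qed.

Lemma ct_inv n (A : 'M[C]_n) : invmx (A ^t*) = (invmx A) ^t*.
Proof. by rewrite trmx_inv map_invmx. Qed.

Lemma inv_uniq n (A B : 'M[C]_n) : A *m B = 1%:M -> invmx A = B.
Proof.
move=> AB; have [Au _] := mulmx1_unit AB.
by rewrite -[invmx A]mulmx1 -AB mulmxA mulVmx // mul1mx.
Qed.

Lemma invmxM n (A B : 'M[C]_n) : A \in unitmx -> B \in unitmx ->
  invmx (A *m B) = invmx B *m invmx A.
Proof.
move=> Au Bu; apply: inv_uniq.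
by rewrite mulmxA -(mulmxA A) mulmxV // mulmx1 mulmxV.
Qed.

Lemma penrose_AG m n (A : 'M[C]_(m, n)) G1 G2 :
  penrose A G1 -> penrose A G2 -> A *m G1 = A *m G2.
Proof.
move=> [h1 h2 h3 h4] [k1 k2 k3 k4].
rewrite -{1}k1 -mulmxA -[in LHS]k3 -h3 -ctM.
by rewrite !mulmxA h1.
Qed.

Lemma penrose_GA m n (A : 'M[C]_(m, n)) G1 G2 :
  penrose A G1 -> penrose A G2 -> G1 *m A = G2 *m A.
Proof.
move=> [h1 h2 h3 h4] [k1 k2 k3 k4].
transitivity ((G1 *m A) *m (G2 *m A)); first by rewrite -{1}k1 !mulmxA.
rewrite -h4 -k4 -ctM.
by rewrite !mulmxA -(mulmxA G2 A G1) -(mulmxA G2 (A *m G1) A) h1 k4.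
Qed.


Lemma mpinv_spec m n (A : 'M[C]_(m, n)) G : penrose A G -> penrose A (mpinv A).
Proof. by move=> hG; rewrite /mpinv; apply: epsilon_spec; exists G. Qed.
Arguments mpinv_spec {m n A G}.
Arguments penrose_AG {m n A G1 G2}.
Arguments penrose_GA {m n A G1 G2}.

Lemma cancR n m k (A : 'M[C]_(n, m)) (B : 'M[C]_(m, n)) (Z : 'M[C]_(n, k)) :
  A *m B \in unitmx -> A *m (B *m (invmx (A *m B) *m Z)) = Z.
Proof. by move=> h; rewrite mulmxA mulKVmx. Qed.
Arguments cancR {n m k A B} Z.

Lemma cancL n m k (A : 'M[C]_(n, m)) (B : 'M[C]_(m, n)) (Z : 'M[C]_(n, k)) :
  A *m B \in unitmx -> invmx (A *m B) *m (A *m (B *m Z)) = Z.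
Proof. by move=> h; rewrite (mulmxA A) mulKmx. Qed.
Arguments cancL {n m k A B} Z.

Lemma fact_pinv m k n (F : 'M[C]_(m, k)) (G : 'M[C]_(k, n)) :
  F ^t* *m F \in unitmx -> G *m G ^t* \in unitmx ->
  (F *m G) *m mpinv (F *m G) = F *m invmx (F ^t* *m F) *m F ^t* /\
  mpinv (F *m G) *m (F *m G) = G ^t* *m invmx (G *m G ^t*) *m G.
Proof.
move=> hF hG.
pose Gp := G ^t* *m (invmx (G *m G ^t*) *m (invmx (F ^t* *m F) *m F ^t*)).
have e1 : F *m G *m Gp = F *m invmx (F ^t* *m F) *m F ^t*.
  by rewrite /Gp -!mulmxA (cancR _ hG).
have e2 : Gp *m (F *m G) = G ^t* *m invmx (G *m G ^t*) *m G.
  by rewrite /Gp -!mulmxA (cancL _ hF).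
have hP : penrose (F *m G) Gp.
  split.
  - by rewrite e1 -!mulmxA (cancL _ hF).
  - by rewrite e2 /Gp -!mulmxA (cancL _ hG).
  - by rewrite e1 !ctM trmxCK -ct_inv ctM trmxCK !mulmxA.
  - by rewrite e2 !ctM trmxCK -ct_inv ctM trmxCK !mulmxA.
have hM := mpinv_spec hP.
by rewrite (penrose_AG hM hP) (penrose_GA hM hP).
Qed.

Lemma dot_ge0 n (w : 'rV[C]_n) : 0 <= (w *m w ^t*) 0 0.
Proof.
have [->|wn0] := eqVneq w 0; first by rewrite mul0mx mxE.
by rewrite -dotmxE ltW // dotmx_is_dotmx.
Qed.

Lemma unit_1ctK p r (K : 'M[C]_(p, r)) : 1%:M + K ^t* *m K \in unitmx.
Proof.
rewrite -row_free_unit -kermx_eq0; apply/rowV0P => v /sub_kermxP hv.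
have h : v *m v ^t* + (v *m K ^t*) *m (v *m K ^t*) ^t* = 0.
  move: (congr1 (mulmx^~ (v ^t*)) hv); rewrite mul0mx mulmxDr mulmx1 mulmxDl.
  by rewrite ctM trmxCK !mulmxA.
move: (congr1 (fun M : 'M[C]_1 => M 0 0) h); rewrite [X in X = _ -> _]mxE [X in _ = X -> _]mxE.
apply: contra_eq; rewrite -dotmxE => vn0.
by apply/lt0r_neq0/ltr_wpDr; [apply: dot_ge0 | apply: dotmx_is_dotmx].
Qed.

End Aux.

Section Main.
Variable C : numClosedFieldType.
Local Set Implicit Arguments. Local Unset Strict Implicit.

Lemma UtU n (U : 'M[C]_n) : U \is unitarymx -> U ^t* *m U = 1%:M.
Proof.
by move=> Uu; rewrite -{2}(trmxCK U); apply/unitarymxP; rewrite trmxC_unitary.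
Qed.

Lemma cjl n m k (U : 'M[C]_n) (A : 'M[C]_n) (B : 'M[C]_(n, m)) (W : 'M[C]_(m, k)) :
  U \is unitarymx -> U *m A *m U ^t* *m (U *m B *m W) = U *m (A *m B) *m W.
Proof. by move=> Uu; rewrite !mulmxA mulmxKtV. Qed.

Lemma cj1 n (U : 'M[C]_n) : U \is unitarymx -> U *m 1%:M *m U ^t* = 1%:M.
Proof. by move=> Uu; rewrite mulmx1; apply/unitarymxP. Qed.

Lemma cj1D n (U A : 'M[C]_n) : U \is unitarymx ->
  1%:M + U *m A *m U ^t* = U *m (1%:M + A) *m U ^t*.
Proof. by move=> Uu; rewrite mulmxDr mulmxDl cj1. Qed.

Lemma cjN n (U A : 'M[C]_n) : - (U *m A *m U ^t*) = U *m (- A) *m U ^t*.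
Proof. by rewrite mulmxN mulNmx. Qed.

Lemma cjct n (U A : 'M[C]_n) : (U *m A *m U ^t*) ^t* = U *m A ^t* *m U ^t*.
Proof. by rewrite !ctM trmxCK mulmxA. Qed.

Lemma cjinv n (U A : 'M[C]_n) : U \is unitarymx -> A \in unitmx ->
  invmx (U *m A *m U ^t*) = U *m invmx A *m U ^t*.
Proof.
move=> Uu Au; apply: inv_uniq.
by rewrite cjl // mulmxV // cj1.
Qed.

Lemma Tcancel n (T G : 'M[C]_n) : T \in unitmx -> G \in unitmx ->
  T *m invmx (T ^t* *m G *m T) *m T ^t* = invmx G.
Proof.
move=> Tu Gu; have Tcu : T ^t* \in unitmx by rewrite ct_unit.
rewrite !invmxM ?unitmx_mul ?Tcu ?Gu //.
rewrite !mulmxA mulmxV // mul1mx -mulmxA mulVmx // mulmx1 //.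
Qed.

Arguments Tcancel {n T G}.

Lemma Tcancel1 n (T : 'M[C]_n) : T \in unitmx ->
  T *m invmx (T ^t* *m T) *m T ^t* = 1%:M.
Proof.
move=> Tu; have := Tcancel Tu (@unitmx1 _ n); by rewrite mulmx1 invmx1.
Qed.


Lemma Dunit r (d : 'rV[C]_r) : (forall i, 0 < d 0 i) -> diag_mx d \in unitmx.
Proof.
move=> dpos; rewrite unitmxE det_diag unitfE; apply/prodf_neq0 => i _.
exact: lt0r_neq0.
Qed.

Lemma eNN r p q (N : 'M[C]_(r + p, r + q)) (U : 'M[C]_(r + p)) (V : 'M[C]_(r + q)) (d : 'rV[C]_r) :
  (forall i, 0 < d 0 i) -> U \is unitarymx -> V \is unitarymx ->
  N = U *m block_mx (diag_mx d) 0 0 0 *m V ^t* ->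
  N *m mpinv N = U *m block_mx 1%:M 0 0 0 *m U ^t* /\
  mpinv N *m N = V *m block_mx 1%:M 0 0 0 *m V ^t*.
Proof.
move=> dpos Uu Vu hN; set D := diag_mx d; have Du := Dunit dpos.
have hN' : N = (U *m col_mx D 0) *m (row_mx 1%:M 0 *m V ^t*).
  by rewrite hN !mulmxA; congr (_ *m _); rewrite -mulmxA mul_col_row mulmx1 !mulmx0 mul0mx.
have hF : (U *m col_mx D 0) ^t* *m (U *m col_mx D 0) = D ^t* *m D.
  by rewrite ctM !mulmxA mulmxKtV // ct_col ct0 mul_row_col mul0mx addr0.
have hG : (row_mx 1%:M 0 *m V ^t*) *m (row_mx 1%:M 0 *m V ^t*) ^t* = 1%:M.
  rewrite ctM trmxCK !mulmxA mulmxKtV // ct_row ct0 ct1 mul_row_col mulmx1.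
  by rewrite mulmx0 addr0.
have hFu : (U *m col_mx D 0) ^t* *m (U *m col_mx D 0) \in unitmx.
  by rewrite hF unitmx_mul ct_unit Du.
have hGu : (row_mx 1%:M 0 *m V ^t*) *m (row_mx 1%:M 0 *m V ^t*) ^t* \in unitmx.
  by rewrite hG unitmx1.
rewrite hN'; have [-> ->] := fact_pinv hFu hGu; rewrite hF hG invmx1 mulmx1.
split.
  rewrite ctM ct_col ct0 !mulmxA; congr (_ *m _); rewrite -!mulmxA; congr (_ *m _).
  rewrite mulmxA mul_col_mx mul_col_row !mul0mx !mulmx0 Tcancel1 //.
rewrite ctM trmxCK ct_row ct1 ct0 !mulmxA; congr (_ *m _); rewrite -!mulmxA.
congr (_ *m _); by rewrite mul_col_row mulmx1 !mulmx0 !mul0mx.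
Qed.


Lemma rowV1 r q (V : 'M[C]_(r + q)) : V \is unitarymx ->
  (row_mx 1%:M 0 *m V ^t*) *m (row_mx 1%:M 0 *m V ^t*) ^t* = 1%:M :> 'M[C]_r.
Proof.
move=> Vu; rewrite ctM trmxCK !mulmxA mulmxKtV // ct_row ct0 ct1 mul_row_col mulmx1.
by rewrite mulmx0 addr0.
Qed.

Lemma inv_blockG r p (G : 'M[C]_r) : G \in unitmx ->
  invmx (block_mx G 0 0 1%:M) = block_mx (invmx G) 0 0 1%:M :> 'M[C]_(r + p).
Proof.
move=> Gu; apply: inv_uniq; rewrite mulmx_block !mulmx0 !mul0mx !addr0 !add0r.
by rewrite mulmxV // mulmx1 scalar_mx_block.
Qed.

Lemma part1 r p q (N : 'M[C]_(r + p, r + q)) (U : 'M[C]_(r + p)) (V : 'M[C]_(r + q))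
  (d : 'rV[C]_r) (X : 'M[C]_(r + p)) X1 X2 X4 :
  (forall i, 0 < d 0 i) -> U \is unitarymx -> V \is unitarymx ->
  N = U *m block_mx (diag_mx d) 0 0 0 *m V ^t* -> X \in unitmx ->
  X = U *m block_mx X1 0 X2 X4 *m U ^t* ->
  let R := X *m EA N *m invmx X *m (EA N - 1%:M) in
  X *m N *m mpinv (X *m N)
  = (1%:M + R) *m N *m mpinv N *m invmx (1%:M + R ^t* *m R) *m (1%:M + R ^t*).
Proof.
move=> dpos Uu Vu hN Xu hX R.
have [hNN _] := eNN dpos Uu Vu hN.
set D := diag_mx d; have Du := Dunit dpos.
have [X1u X4u] : X1 \in unitmx /\ X4 \in unitmx.
  move: Xu; rewrite hX !unitmx_mul => /andP[/andP[_ +] _].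
  by rewrite unitmxE det_lblock unitrM -!unitmxE => /andP[].
set K := X2 *m invmx X1.
have Gu := unit_1ctK K.
set S := invmx (1%:M + K ^t* *m K).
set T := X1 *m D.
have Tu : T \in unitmx by rewrite unitmx_mul X1u Du.
set B := col_mx 1%:M K.
have eB : B = col_mx 1%:M K by []. have eT : T = X1 *m D by [].
have eS : S = invmx (1%:M + K ^t* *m K) by []. have eK : K = X2 *m invmx X1 by [].
clearbody B T S K.
have eM1 : X *m N = (U *m (B *m T)) *m (row_mx 1%:M 0 *m V ^t*).
  rewrite hX hN cjl // !mulmxA; congr (_ *m _); rewrite -!mulmxA; congr (_ *m _).
  rewrite eB eT mulmx_block ?mulmx0 ?mul0mx ?addr0 !mulmxA !mul_col_mx.
  by rewrite block_mxEv !mul_mx_row ?mulmx1 ?mulmx0 ?mul1mx eK mulmxKV.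
have hF1 : (U *m (B *m T)) ^t* *m (U *m (B *m T)) = T ^t* *m (1%:M + K ^t* *m K) *m T.
  rewrite !ctM !mulmxA mulmxKtV //; congr (_ *m _).
  by rewrite -mulmxA eB ct_col ct1 mul_row_col mul1mx.
have hF1u : (U *m (B *m T)) ^t* *m (U *m (B *m T)) \in unitmx.
  by rewrite hF1 !unitmx_mul ct_unit Tu Gu.
have hG1u : (row_mx 1%:M 0 *m V ^t*) *m (row_mx 1%:M 0 *m V ^t*) ^t* \in unitmx.
  by rewrite rowV1 // unitmx1.
have hL : X *m N *m mpinv (X *m N) = U *m (B *m S *m B ^t*) *m U ^t*.
  rewrite eM1; have [-> _] := fact_pinv hF1u hG1u; rewrite hF1.
  by rewrite eS -(Tcancel Tu Gu) !ctM !mulmxA.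
rewrite hL.
have hEA : EA N = U *m block_mx 0 0 0 1%:M *m U ^t*.
  rewrite /EA hNN -{1}(cj1 Uu) -mulmxBl -mulmxBr; congr (_ *m _ *m _).
  by rewrite (scalar_mx_block r p) opp_block_mx add_block_mx subrr !oppr0 !addr0.
have hEA1 : EA N - 1%:M = U *m block_mx (- 1%:M) 0 0 0 *m U ^t*.
  by rewrite /EA hNN addrAC subrr add0r cjN opp_block_mx !oppr0.
pose Z := block_mx (invmx X1) 0 (- (invmx X4 *m X2 *m invmx X1)) (invmx X4).
have hXZ : block_mx X1 0 X2 X4 *m Z = 1%:M.
  rewrite /Z mulmx_block ?mulmx0 ?mul0mx ?addr0 ?add0r !mulmxV //.
  by rewrite mulmxN !mulmxA mulmxV // mul1mx subrr scalar_mx_block.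
have hiX : invmx X = U *m Z *m U ^t*.
  have [hXu _] := mulmx1_unit hXZ.
  by rewrite hX cjinv // (inv_uniq hXZ).
have hR : R = U *m block_mx 0 0 K 0 *m U ^t*.
  rewrite /R hiX hEA1 hEA hX !cjl //; congr (_ *m _ *m _).
  rewrite /Z !mulmx_block ?mulmx0 ?mul0mx ?addr0 ?add0r ?mulmx1 ?mul1mx.
  rewrite ?mulmx0 ?mul0mx ?addr0 ?add0r ?mulmx0 ?mul0mx ?oppr0.
  by rewrite !mulmxN mulmx1 opprK !mulmxA mulmxV // mul1mx eK.
have hRR : (block_mx 0 0 K 0 : 'M_(r + p)) ^t* *m (block_mx 0 0 K 0 : 'M_(r + p))
    = block_mx (K ^t* *m K) 0 0 0 :> 'M_(r + p).
  by rewrite ct_block !ct0 mulmx_block ?mulmx0 ?mul0mx ?addr0 ?add0r.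
have h1R : 1%:M + block_mx (K ^t* *m K) 0 0 0
    = block_mx (1%:M + K ^t* *m K) 0 0 1%:M :> 'M_(r + p).
  by rewrite (scalar_mx_block r p) add_block_mx !addr0.
have hBu : (block_mx (1%:M + K ^t* *m K) 0 0 1%:M : 'M_(r + p)) \in unitmx.
  by rewrite unitmxE det_ublock det1 mulr1 -unitmxE.
rewrite hR -(mulmxA _ N) hNN cjct cjl // hRR !cj1D // h1R cjinv // !cjl //.
rewrite inv_blockG // -eS; congr (_ *m _ *m _).
rewrite eB ct_block !ct0 ct_col ct1 (scalar_mx_block r p) !add_block_mx.
rewrite mul_col_mx mul_col_row !mulmx_block.
rewrite ?mulmx0 ?mul0mx ?addr0 ?add0r ?mulmx1 ?mul1mx.
by rewrite ?mulmx0 ?mul0mx ?addr0 ?add0r ?mulmx1 ?mul1mx.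
Qed.


Lemma colU1 r p (U : 'M[C]_(r + p)) : U \is unitarymx ->
  (U *m col_mx 1%:M 0) ^t* *m (U *m col_mx 1%:M 0) = 1%:M :> 'M[C]_r.
Proof.
move=> Uu; rewrite ctM !mulmxA mulmxKtV // ct_col ct0 ct1 mul_row_col mulmx1.
by rewrite mul0mx addr0.
Qed.

Lemma part2 r p q (N : 'M[C]_(r + p, r + q)) (U : 'M[C]_(r + p)) (V : 'M[C]_(r + q))
  (d : 'rV[C]_r) (Y : 'M[C]_(r + q)) Y1 Y3 Y4 :
  (forall i, 0 < d 0 i) -> U \is unitarymx -> V \is unitarymx ->
  N = U *m block_mx (diag_mx d) 0 0 0 *m V ^t* -> Y \in unitmx ->
  Y = V *m block_mx Y1 Y3 0 Y4 *m V ^t* ->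
  let L := (FA N - 1%:M) *m invmx Y *m FA N *m Y in
  mpinv (N *m Y) *m (N *m Y)
  = (1%:M + L ^t*) *m invmx (1%:M + L *m L ^t*) *m mpinv N *m N *m (1%:M + L).
Proof.
move=> dpos Uu Vu hN Yu hY L.
have [_ hNtN] := eNN dpos Uu Vu hN.
set D := diag_mx d; have Du := Dunit dpos.
have [Y1u Y4u] : Y1 \in unitmx /\ Y4 \in unitmx.
  move: Yu; rewrite hY !unitmx_mul => /andP[/andP[_ +] _].
  by rewrite unitmxE det_ublock unitrM -!unitmxE => /andP[].
set J := invmx Y1 *m Y3.
have Hu : 1%:M + J *m J ^t* \in unitmx.
  by have := unit_1ctK (J ^t*); rewrite trmxCK.
set S := invmx (1%:M + J *m J ^t*).
set T := D *m Y1.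
have Tu : T \in unitmx by rewrite unitmx_mul Y1u Du.
have Tcu : T ^t* \in unitmx by rewrite ct_unit.
set Cm := row_mx 1%:M J.
have eCm : Cm = row_mx 1%:M J by []. have eT : T = D *m Y1 by [].
have eS : S = invmx (1%:M + J *m J ^t*) by []. have eJ : J = invmx Y1 *m Y3 by [].
clearbody Cm T S J.
have eM2 : N *m Y = (U *m col_mx 1%:M 0) *m (T *m Cm *m V ^t*).
  rewrite hY hN !mulmxA mulmxKtV //; congr (_ *m _); rewrite -!mulmxA; congr (_ *m _).
  rewrite eCm eT mulmx_block ?mulmx0 ?mul0mx ?addr0 ?add0r mul_mx_row mul_col_row.
  by rewrite ?mulmx1 ?mul1mx ?mul0mx eJ !mulmxA mulmxK.
have hG2 : (T *m Cm *m V ^t*) *m (T *m Cm *m V ^t*) ^t* = T *m (1%:M + J *m J ^t*) *m T ^t*.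
  rewrite !ctM trmxCK !mulmxA mulmxKtV //; congr (_ *m _).
  by rewrite -mulmxA eCm ct_row ct1 mul_row_col mul1mx.
have hFu : (U *m col_mx 1%:M 0) ^t* *m (U *m col_mx 1%:M 0) \in unitmx.
  by rewrite colU1 // unitmx1.
have hGu : (T *m Cm *m V ^t*) *m (T *m Cm *m V ^t*) ^t* \in unitmx.
  by rewrite hG2 !unitmx_mul Tu Hu ct_unit Tu.
have hL2 : mpinv (N *m Y) *m (N *m Y) = V *m (Cm ^t* *m S *m Cm) *m V ^t*.
  rewrite eM2; have [_ ->] := fact_pinv hFu hGu; rewrite hG2.
  rewrite eS; have := Tcancel Tcu Hu; rewrite trmxCK => <-.
  by rewrite !ctM trmxCK !mulmxA.
rewrite hL2.
have hFA : FA N = V *m block_mx 0 0 0 1%:M *m V ^t*.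
  rewrite /FA hNtN -{1}(cj1 Vu) -mulmxBl -mulmxBr; congr (_ *m _ *m _).
  by rewrite (scalar_mx_block r q) opp_block_mx add_block_mx subrr !oppr0 !addr0.
have hFA1 : FA N - 1%:M = V *m block_mx (- 1%:M) 0 0 0 *m V ^t*.
  by rewrite /FA hNtN addrAC subrr add0r cjN opp_block_mx !oppr0.
pose Z := block_mx (invmx Y1) (- (invmx Y1 *m Y3 *m invmx Y4)) 0 (invmx Y4).
have hYZ : block_mx Y1 Y3 0 Y4 *m Z = 1%:M.
  rewrite /Z mulmx_block ?mulmx0 ?mul0mx ?addr0 ?add0r !mulmxV //.
  by rewrite mulmxN !mulmxA mulmxV // mul1mx addNr scalar_mx_block.
have hiY : invmx Y = V *m Z *m V ^t*.
  have [hYu _] := mulmx1_unit hYZ.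
  by rewrite hY cjinv // (inv_uniq hYZ).
have hL : L = V *m block_mx 0 J 0 0 *m V ^t*.
  rewrite /L hiY hFA1 hFA hY !cjl //; congr (_ *m _ *m _).
  rewrite /Z !mulmx_block ?mulmx0 ?mul0mx ?addr0 ?add0r ?mulmx1 ?mul1mx.
  rewrite ?mulmx0 ?mul0mx ?addr0 ?add0r ?mulmx0 ?mul0mx ?oppr0.
  by rewrite mulNmx mul1mx opprK mulmxKV // eJ.
have hLL : (block_mx 0 J 0 0 : 'M_(r + q)) *m (block_mx 0 J 0 0 : 'M_(r + q)) ^t*
    = block_mx (J *m J ^t*) 0 0 0 :> 'M_(r + q).
  by rewrite ct_block !ct0 mulmx_block ?mulmx0 ?mul0mx ?addr0 ?add0r.
have h1L : 1%:M + block_mx (J *m J ^t*) 0 0 0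
    = block_mx (1%:M + J *m J ^t*) 0 0 1%:M :> 'M_(r + q).
  by rewrite (scalar_mx_block r q) add_block_mx !addr0.
have hBu : (block_mx (1%:M + J *m J ^t*) 0 0 1%:M : 'M_(r + q)) \in unitmx.
  by rewrite unitmxE det_ublock det1 mulr1 -unitmxE.
rewrite hL -(mulmxA _ (mpinv N) N) hNtN cjct cjl // hLL !cj1D // h1L cjinv // !cjl //.
rewrite inv_blockG // -eS; congr (_ *m _ *m _).
rewrite eCm ct_block !ct0 ct_row ct1 (scalar_mx_block r q) !add_block_mx.
rewrite mul_col_mx mul_col_row !mulmx_block.
rewrite ?mulmx0 ?mul0mx ?addr0 ?add0r ?mulmx1 ?mul1mx.
by rewrite ?mulmx0 ?mul0mx ?addr0 ?add0r ?mulmx1 ?mul1mx.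
Qed.

End Main.

Theorem corollary3p2 (C : numClosedFieldType) (r p q : nat)
  (N : 'M[C]_(r + p, r + q)) (U : 'M[C]_(r + p)) (V : 'M[C]_(r + q))
  (d : 'rV[C]_r) (X : 'M[C]_(r + p)) (Y : 'M[C]_(r + q)) :
  \rank N = r ->
  (forall i, 0 < d 0 i) ->
  U \is unitarymx -> V \is unitarymx ->
  N = U *m block_mx (diag_mx d) 0 0 0 *m V ^t* ->
  X \in unitmx -> Y \in unitmx ->
  let M1 := X *m N in
  let M2 := N *m Y in
  ((exists (X1 : 'M[C]_r) (X2 : 'M[C]_(p, r)) (X4 : 'M[C]_p),
       X = U *m block_mx X1 0 X2 X4 *m U ^t*) ->
   let R := X *m EA N *m invmx X *m (EA N - 1%:M) in
   M1 *m mpinv M1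
   = (1%:M + R) *m N *m mpinv N *m invmx (1%:M + R ^t* *m R) *m (1%:M + R ^t*))
  /\
  ((exists (Y1 : 'M[C]_r) (Y3 : 'M[C]_(r, q)) (Y4 : 'M[C]_q),
       Y = V *m block_mx Y1 Y3 0 Y4 *m V ^t*) ->
   let L := (FA N - 1%:M) *m invmx Y *m FA N *m Y in
   mpinv M2 *m M2
   = (1%:M + L ^t*) *m invmx (1%:M + L *m L ^t*) *m mpinv N *m N *m (1%:M + L)).
Proof.
move=> _ dpos Uu Vu hN Xu Yu M1 M2; split.
  by move=> [X1 [X2 [X4 hX]]] R; apply: (part1 dpos Uu Vu hN Xu hX).
by move=> [Y1 [Y3 [Y4 hY]]] L; apply: (part2 dpos Uu Vu hN Yu hY).
Qed.
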